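(* Let $k\ge1$ and let $H$ be a $k$-local operator on $N$ qubits (not necessarily Hermitian). If $H|W^q\rangle=0$ for all $q\in\{0,1,\dots,\min(2k,N)\}$, then $H|W^p\rangle=0$ for all $p\in\{0,1,\dots,N\}$.
   Context: System of $N$ qubits with local basis $|0\rangle,|1\rangle$; $s_i^\dagger$ acts on site $i$ as $s^\dagger|0\rangle=|1\rangle$, $s^\dagger|1\rangle=0$, $s_i=(s_i^\dagger)^\dagger$; $|\overline 0\rangle=|0\rangle^{\otimes N}$. Every operator has a unique expansion in normal-ordered strings $s^\dagger_{j_1}\cdots s^\dagger_{j_n}s_{k_1}\cdots s_{k_m}$ (the $j$'s pairwise distinct, the $k$'s pairwise distinct); an operator is $k$-local if every string with nonzero coefficient involves at most $k$ distinct sites. $S^\dagger=\sum_i s_i^\dagger$ and $|W^p\rangle$ is the normalization of $(S^\dagger)^p|\overline 0\rangle$ for $p=0,\dots,N$. *)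

(* Defs.v *)
(* Scalars: an arbitrary numClosedFieldType C (e.g. the complex numbers). *)
From mathcomp Require Import all_boot all_order all_algebra.
Set Implicit Arguments. Unset Strict Implicit. Unset Printing Implicit Defensive.
Import Order.TTheory GRing.Theory Num.Theory.
Local Open Scope ring_scope.

(* Computational basis of N qubits: a basis state |x> is labelled by the set
   x : {set 'I_N} of sites in state |1>.  Vectors and operators are given by
   their coordinates / matrix elements <y|A|x> in this basis. *)
Definition vec (C : numClosedFieldType) (N : nat) := {set 'I_N} -> C.
Definition op (C : numClosedFieldType) (N : nat) := {set 'I_N} -> {set 'I_N} -> C.

Section Ops.
Variables (C : numClosedFieldType) (N : nat).

Definition opmul (A B : op C N) : op C N :=
  fun y x => \sum_(z : {set 'I_N}) A y z * B z x.
Definition opid : op C N := fun y x => (y == x)%:R.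
Definition apply (A : op C N) (v : vec C N) : vec C N :=
  fun y => \sum_(x : {set 'I_N}) A y x * v x.

Definition sdag (i : 'I_N) : op C N :=
  fun y x => ((i \notin x) && (y == i |: x))%:R.
Definition sann (i : 'I_N) : op C N :=
  fun y x => ((i \in x) && (y == x :\ i))%:R.

Definition nstring (J K : {set 'I_N}) : op C N :=
  opmul (foldr (fun j A => opmul (sdag j) A) opid (enum J))
        (foldr (fun k A => opmul (sann k) A) opid (enum K)).

Definition klocal (k : nat) (H : op C N) : Prop :=
  exists c : {set 'I_N} -> {set 'I_N} -> C,
    (forall y x, H y x = \sum_(J : {set 'I_N}) \sum_(K : {set 'I_N}) c J K * nstring J K y x)
    /\ (forall J K, c J K != 0 -> (#|J :|: K| <= k)%N).

Definition Sdag : op C N := fun y x => \sum_(i < N) sdag i y x.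

Definition vac : vec C N := fun y => (y == set0)%:R.

Definition vnorm (v : vec C N) : C := sqrtC (\sum_(y : {set 'I_N}) `|v y| ^+ 2).

Definition Wstate (p : nat) : vec C N :=
  let v := iter p (apply Sdag) vac in fun y => (vnorm v)^-1 * v y.

End Ops.

(* Main.v *)
Require Import Defs.
From mathcomp Require Import all_boot all_order all_algebra zify.
Import Order.TTheory GRing.Theory Num.Theory.
Local Open Scope ring_scope.
Set Implicit Arguments. Unset Strict Implicit.

Section Aux.
Variables (C : numClosedFieldType) (N : nat).
Implicit Types (A B : op C N) (v w : vec C N) (J K T R y z x : {set 'I_N}).

Lemma apply_opmul A B v y : apply (opmul A B) v y = apply A (apply B v) y.
Proof.
rewrite /apply /opmul.
under eq_bigr do rewrite big_distrl /=.
rewrite exchange_big /=; apply: eq_bigr => z _.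
rewrite big_distrr /=; apply: eq_bigr => x _; by rewrite mulrA.
Qed.

Lemma apply_opid v y : apply (@opid C N) v y = v y.
Proof.
rewrite /apply /opid (bigD1 y) //= eqxx mul1r big1 ?addr0 // => x.
by rewrite eq_sym => /negbTE ->; rewrite mul0r.
Qed.

Lemma apply_sann k v z : apply (sann C k) v z = (k \notin z)%:R * v (k |: z).
Proof.
rewrite /apply /sann.
have [kz|kz] := boolP (k \in z).
  rewrite mul0r big1 // => x _.
  case: (boolP (k \in x)) => kx; last by rewrite mul0r.
  case: eqP => [ez|]; last by rewrite mul0r.
  by move: kz; rewrite ez !inE eqxx.
rewrite (bigD1 (k |: z)) //= setU11 setU1K // eqxx mul1r big1 ?addr0 // => x nx.
case: (boolP (k \in x)) => kx /=; last by rewrite mul0r.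
case: eqP => [ez|]; last by rewrite mul0r.
by move: nx; rewrite ez setD1K // eqxx.
Qed.

Lemma apply_sdag j v y : apply (sdag C j) v y = (j \in y)%:R * v (y :\ j).
Proof.
rewrite /apply /sdag.
have [jy|jy] := boolP (j \in y); last first.
  rewrite mul0r big1 // => x _.
  case: eqP => [ey|]; last by rewrite andbF mul0r.
  by move: jy; rewrite ey setU11.
rewrite (bigD1 (y :\ j)) //= setD11 setD1K // eqxx mul1r big1 ?addr0 // => x nx.
case: (boolP (j \in x)) => jx /=; first by rewrite mul0r.
case: eqP => [ey|]; last by rewrite mul0r.
by move: nx; rewrite ey setU1K // eqxx.
Qed.

End Aux.

Lemma disj_step (T : finType) (k : T) (z S : {set T}) : k \notin S ->
  (k \notin z) && ((k |: z) :&: S == set0) = (z :&: (k |: S) == set0).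
Proof.
move=> kS.
rewrite setIUl setIUr !setU_eq0 !setI_eq0 disjoints1 kS.
rewrite (disjoint_sym z [set k]) disjoints1 /=. by rewrite andbC.
Qed.

Lemma set_cons (T : finType) (k : T) (s : seq T) :
  [set x in k :: s] = k |: [set x in s].
Proof. by apply/setP => x; rewrite !inE. Qed.

Section Aux2.
Variables (C : numClosedFieldType) (N : nat).
Implicit Types (A B : op C N) (v w : vec C N) (J K T R y z x : {set 'I_N}).

Lemma apply_fsann (s : seq 'I_N) v z : uniq s ->
  apply (foldr (fun k A => opmul (sann C k) A) (@opid C N) s) v z =
  (z :&: [set x in s] == set0)%:R * v (z :|: [set x in s]).
Proof.
elim: s z => [|k s IH] z /=.
  move=> _; rewrite apply_opid.
  have -> : [set x in [::] : seq 'I_N] = set0 by apply/setP => x; rewrite !inE.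
  by rewrite setI0 setU0 eqxx mul1r.
case/andP => ks us.
rewrite apply_opmul apply_sann IH // mulrA -natrM mulnb set_cons.
rewrite disj_step ?inE //.
by rewrite setUA (setUC z) -setUA.
Qed.

Lemma apply_fsdag (s : seq 'I_N) v y : uniq s ->
  apply (foldr (fun k A => opmul (sdag C k) A) (@opid C N) s) v y =
  ([set x in s] \subset y)%:R * v (y :\: [set x in s]).
Proof.
elim: s y => [|k s IH] y /=.
  move=> _; rewrite apply_opid.
  have -> : [set x in [::] : seq 'I_N] = set0 by apply/setP => x; rewrite !inE.
  by rewrite sub0set setD0 mul1r.
case/andP => ks us.
rewrite apply_opmul apply_sdag IH // mulrA -natrM mulnb set_cons.
rewrite subsetD1 inE ks andbT subUset sub1set setDDl.
done.
Qed.

End Aux2.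

Definition bb (T : finType) (J K z : {set T}) (q : nat) : bool :=
  [&& J \subset z, (z :\: J) :&: K == set0 & #|(z :\: J) :|: K| == q].

Lemma bb_toggle (T : finType) (J K z : {set T}) q r :
  r \in z -> r \notin J -> r \notin K -> (0 < q)%N ->
  bb J K z q = bb J K (z :\ r) q.-1.
Proof.
move=> rz rJ rK q0.
have e1 : (z :\ r :\: J) :&: K = (z :\: J) :&: K.
  apply/setP => x; rewrite !inE; case: (eqVneq x r) => [->|] //=.
  by rewrite (negbTE rK) !andbF.
have e2 : (z :\: J) :|: K = r |: ((z :\ r :\: J) :|: K).
  apply/setP => x; rewrite !inE; case: (eqVneq x r) => [->|] /=.
    by rewrite rz rJ.
  by [].
rewrite /bb subsetD1 rJ andbT e1 e2 cardsU1 !inE eqxx (negbTE rK) /=.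
rewrite andbF orbF /=; case: q q0 => // q _; by rewrite add1n eqSS.
Qed.

Lemma alt_zero (T : finType) (Cf : numClosedFieldType) (J K y R : {set T}) p r :
  R \subset y -> r \in R -> r \notin J -> r \notin K -> (#|R| <= p)%N ->
  \sum_(S : {set T}) (S \subset R)%:R * (-1) ^+ #|S| * (bb J K (y :\: S) (p - #|S|))%:R
    = 0 :> Cf.
Proof.
move=> Ry rR rJ rK Rp.
pose F := fun S : {set T} => (S \subset R)%:R * (-1) ^+ #|S| * (bb J K (y :\: S) (p - #|S|))%:R :> Cf.
rewrite -/(\sum_S F S).
have c1 : forall S : {set T}, r \notin S -> F (r |: S) = - F S.
  move=> S rS; rewrite /F subUset sub1set rR /= cardsU1 rS add1n exprS mulN1r.
  have [SR|SR] := boolP (S \subset R); last by rewrite !mul0r oppr0.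
  have Sr : (#|S| < p)%N.
    have : S \subset R :\ r by rewrite subsetD1 SR.
    move/subset_leq_card => h; move: Rp; rewrite (cardsD1 r R) rR add1n => Rp.
    exact: (leq_ltn_trans h Rp).
  rewrite (@bb_toggle T J K (y :\: S) (p - #|S|) r) ?subn_gt0 //; last first.
    by rewrite !inE rS (subsetP Ry).
  rewrite setDDl (setUC S) subnS. by rewrite mulrN mulNr.
have c2 : forall S : {set T}, F (if r \in S then S :\ r else r |: S) = - F S.
  move=> S; case: ifP => rS; last by rewrite c1 // rS.
  by rewrite -{2}(setD1K rS) c1 ?setD11 // opprK.
have inv : involutive (fun S : {set T} => if r \in S then S :\ r else r |: S).
  move=> S /=; case: (boolP (r \in S)) => rS.
    by rewrite setD11 setD1K.
  by rewrite setU11 setU1K.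
have : \sum_S F S = - \sum_S F S.
  rewrite {1}(reindex_inj (inv_inj inv)) /= -sumrN.
  by apply: eq_bigr => S _; rewrite c2.
move/eqP; rewrite -subr_eq0 opprK -mulr2n mulrn_eq0 /=.
by move/eqP.
Qed.

Section Main.
Variables (C : numClosedFieldType) (N : nat).
Implicit Types (A B : op C N) (v w : vec C N) (J K T R y z x : {set 'I_N}).

Definition Dv (p : nat) : vec C N := fun x => (#|x| == p)%:R.

Lemma apply_nstring J K w y :
  apply (nstring C J K) w y =
  (J \subset y)%:R * ((y :\: J) :&: K == set0)%:R * w ((y :\: J) :|: K).
Proof.
rewrite /nstring apply_opmul apply_fsdag ?enum_uniq // set_enum.
by rewrite apply_fsann ?enum_uniq // set_enum mulrA.
Qed.

Lemma apply_nstringD J K p y :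
  apply (nstring C J K) (Dv p) y = (bb J K y p)%:R.
Proof. by rewrite apply_nstring /Dv -!natrM !mulnb /bb andbA. Qed.

Lemma apply_decomp (H : op C N) (c : {set 'I_N} -> {set 'I_N} -> C) v y :
  (forall y x, H y x = \sum_(J : {set 'I_N}) \sum_(K : {set 'I_N}) c J K * nstring C J K y x) ->
  apply H v y = \sum_J \sum_K c J K * apply (nstring C J K) v y.
Proof.
move=> hc; rewrite /apply.
under eq_bigr do rewrite hc big_distrl /=.
rewrite exchange_big /=; apply: eq_bigr => J _.
under eq_bigr do rewrite big_distrl /=.
rewrite exchange_big /=; apply: eq_bigr => K _.
rewrite big_distrr /=; apply: eq_bigr => x _; by rewrite mulrA.
Qed.

Lemma apply_scale (H : op C N) (a : C) v y :
  apply H (fun x => a * v x) y = a * apply H v y.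
Proof.
rewrite /apply big_distrr /=; apply: eq_bigr => x _; by rewrite mulrCA.
Qed.

Lemma iter_Sdag p y :
  iter p (apply (Sdag C (N:=N))) (vac C (N:=N)) y = p`!%:R * Dv p y.
Proof.
elim: p y => [|p IH] y /=.
  by rewrite /vac /Dv cards_eq0 mul1r.
rewrite /apply /Sdag.
under eq_bigr do rewrite big_distrl /=.
rewrite exchange_big /=.
under eq_bigr => i _ do rewrite -/(apply (sdag C i) _ y) apply_sdag IH.
under eq_bigr do rewrite mulr_natl mulrb.
rewrite -big_mkcond /=.
rewrite (eq_bigr (fun _ => p`!%:R * (#|y|.-1 == p)%:R)); last first.
  by move=> i iy; rewrite /Dv (cardsD1 i y) iy add1n.
rewrite sumr_const /Dv.
case E: #|y| => [|m] /=; first by rewrite mulr0n mulr0.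
rewrite factS natrM eqSS.
case: eqP => [->|ne]; last by rewrite !mulr0 mul0rn.
by rewrite !mulr1 mulr_natl.
Qed.

End Main.

Section Final.
Variables (C : numClosedFieldType) (N : nat).

Lemma apply_ext (H : op C N) (v w : vec C N) y :
  (forall x, v x = w x) -> apply H v y = apply H w y.
Proof. by move=> e; rewrite /apply; apply: eq_bigr => x _; rewrite e. Qed.

Lemma W_Dv (H : op C N) q y :
  apply H (@Wstate C N q) y =
  ((vnorm (iter q (apply (Sdag C (N:=N))) (vac C (N:=N))))^-1 * q`!%:R)
    * apply H (@Dv C N q) y.
Proof.
rewrite -apply_scale; apply: apply_ext => x.
by rewrite /Wstate /= iter_Sdag mulrA.
Qed.

Lemma W_equiv (H : op C N) q :
  (forall y, apply H (@Wstate C N q) y = 0) -> forall y, apply H (@Dv C N q) y = 0.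
Proof.
move=> h y; move: (h y); rewrite W_Dv.
set v := iter q _ _.
have [vn|vn] := eqVneq (vnorm v) 0; last first.
  move/eqP; rewrite !mulf_eq0 invr_eq0 (negbTE vn) pnatr_eq0 eqn0Ngt fact_gt0 /=.
  by move/eqP.
move=> _; rewrite /apply big1 // => x _.
move: vn; rewrite /vnorm => /eqP; rewrite sqrtC_eq0 => /eqP s0.
have := psumr_eq0P (fun i _ => exprn_ge0 2 (normr_ge0 (v i))) s0 (i:=x) isT.
have vx := @iter_Sdag C N q x; rewrite -/v in vx.
rewrite vx => hx; suff -> : @Dv C N q x = 0 by rewrite mulr0.
move/eqP: hx; rewrite expf_eq0 /= normr_eq0 mulf_eq0 pnatr_eq0 eqn0Ngt fact_gt0 /=.
by move/eqP.
Qed.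

End Final.

Lemma E_zero (C : numClosedFieldType) (N k : nat) (H : op C N)
  (c : {set 'I_N} -> {set 'I_N} -> C) :
  (forall y x, H y x = \sum_(J : {set 'I_N}) \sum_(K : {set 'I_N}) c J K * nstring C J K y x) ->
  (forall J K, c J K != 0 -> (#|J :|: K| <= k)%N) ->
  (forall q, (q <= 2 * k)%N -> forall y, apply H (@Dv C N q) y = 0) ->
  forall p y, apply H (@Dv C N p) y = 0.
Proof.
move=> hc hk hyp; elim/ltn_ind => p IH y.
case: (leqP p (2 * k)) => [hp|hp]; first exact: hyp.
case: (leqP #|y| k) => hy.
  rewrite (apply_decomp _ _ hc); apply: big1 => J _; apply: big1 => K _.
  rewrite apply_nstringD.
  have [c0|cn] := eqVneq (c J K) 0; first by rewrite c0 mul0r.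
  have hJK := hk _ _ cn.
  suff -> : bb J K y p = false by rewrite mulr0.
  rewrite /bb; apply/negP => /and3P [_ _ /eqP e].
  have h1 : (#|y :\: J :|: K| <= #|y :\: J| + #|K|)%N by rewrite cardsU leq_subr.
  have h2 : (#|y :\: J| <= #|y|)%N by apply: subset_leq_card; apply: subsetDl.
  have h3 : (#|K| <= #|J :|: K|)%N by apply: subset_leq_card; apply: subsetUr.
  lia.
pose R := [set x in take k.+1 (enum y)].
have cardR : #|R| = k.+1.
  rewrite cardsE; move/card_uniqP: (take_uniq k.+1 (enum_uniq (mem y))) => ->.
  rewrite size_take -cardE; case: ltnP => // h; apply/eqP; rewrite eqn_leq h; exact: hy.
have Ry : R \subset y.
  by apply/subsetP => x; rewrite inE => /mem_take; rewrite mem_enum.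
have key : \sum_(S : {set 'I_N}) (S \subset R)%:R * (-1) ^+ #|S| *
             apply H (@Dv C N (p - #|S|)) (y :\: S) = 0.
  under eq_bigr do rewrite (apply_decomp _ _ hc) big_distrr /=.
  rewrite exchange_big /=; apply: big1 => J _.
  under eq_bigr do rewrite big_distrr /=.
  rewrite exchange_big /=; apply: big1 => K _.
  under eq_bigr do rewrite apply_nstringD mulrCA.
  rewrite -big_distrr /=.
  have [c0|cn] := eqVneq (c J K) 0; first by rewrite c0 mul0r.
  have hJK := hk _ _ cn.
  have : ~~ (R \subset J :|: K).
    apply/negP => /subset_leq_card; rewrite cardR => h; lia.
  case/subsetPn => r rR; rewrite inE negb_or => /andP [rJ rK].
  by rewrite (@alt_zero _ C J K y R p r) ?mulr0 // cardR; lia.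
move: key; rewrite (bigD1 set0) //= big1 ?addr0.
  by rewrite sub0set cards0 expr0 !mul1r setD0 subn0.
move=> S S0; rewrite IH ?mulr0 //.
rewrite ltn_subrL; apply/andP; split; last by lia.
by rewrite lt0n cards_eq0.
Qed.

Unset Implicit Arguments.
Set Strict Implicit.

Theorem proposition3 (C : numClosedFieldType) (N k : nat) (H : op C N) :
  (1 <= k)%N -> klocal k H ->
  (forall q : nat, (q <= minn (2 * k) N)%N -> forall y, apply H (@Wstate C N q) y = 0) ->
  forall p : nat, (p <= N)%N -> forall y, apply H (@Wstate C N p) y = 0.
Proof.
move=> _ [c [hc hk]] hyp p _ y.
rewrite W_Dv (E_zero hc hk) ?mulr0 // => q hq z.
have [qN|qN] := leqP q N.
  apply: W_equiv => w; apply: hyp; by rewrite leq_min hq qN.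
rewrite /apply big1 // => x _.
suff -> : @Dv C N q x = 0 by rewrite mulr0.
rewrite /Dv; case: eqP => // e.
have := max_card (mem x); rewrite card_ord -/#|x| e => h; lia.
Qed.
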